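(* There is a constant $c>0$ such that for all $n\in\mathbb{N}$ and all integers $k\ge 2$, the randomized query complexity of $TARSKI(n,k)$ is at least $c\cdot\frac{k\log n}{\log k}$.
   Context: For $k,n\in\mathbb{N}$ let $\mathcal{L}_n^k=\{0,1,\ldots,n-1\}^k$ with the componentwise order. $TARSKI(n,k)$: given oracle access to an unknown monotone $f:\mathcal{L}_n^k\to\mathcal{L}_n^k$ (a query of $v$ returns $f(v)$), find $x$ with $f(x)=x$. The randomized query complexity is the minimum, over randomized algorithms that on every input output a fixed point with probability at least $9/10$, of the worst-case expected number of queries (expectation over the algorithm's coins). *)

(* Defs.v *)
From HB Require Import structures.
From mathcomp Require Import all_boot all_order all_algebra.
From mathcomp Require Import all_classical all_reals all_analysis.
Set Implicit Arguments. Unset Strict Implicit. Unset Printing Implicit Defensive.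
Import Order.TTheory GRing.Theory Num.Theory.
Local Open Scope ring_scope.

Definition grid (n k : nat) : finType := {ffun 'I_k -> 'I_n}.

Definition grid_le (n k : nat) (x y : grid n k) : Prop :=
  forall i : 'I_k, (x i <= y i)%N.

Definition monotone_map (n k : nat) (f : grid n k -> grid n k) : Prop :=
  forall x y, grid_le x y -> grid_le (f x) (f y).

(* Deterministic (adaptive) query algorithms = finite decision trees:
   either output a point, or query a point v and continue according to
   the oracle's answer f v. *)
Inductive dtree (V : Type) : Type :=
  | Out : V -> dtree V
  | Query : V -> (V -> dtree V) -> dtree V.

Fixpoint run (V : Type) (t : dtree V) (f : V -> V) : V * nat :=
  match t with
  | Out x => (x, 0%N)
  | Query v g => let r := run (g (f v)) f in (r.1, r.2.+1)
  end.

(* A randomized query algorithm = a discrete (countably supported)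
   probability distribution over deterministic decision trees:
   tree i is chosen with probability weight i. *)
Record rand_alg (R : realType) (V : Type) := RandAlg {
  ra_tree : nat -> dtree V;
  ra_weight : nat -> R;
  ra_weight_ge0 : forall i, 0 <= ra_weight i;
  ra_weight_sum1 : (\sum_(i <oo) (ra_weight i)%:E = 1)%E
}.

Definition success_prob (R : realType) (V : eqType) (A : rand_alg R V)
    (f : V -> V) : \bar R :=
  (\sum_(i <oo) (ra_weight A i *
       (f (run (ra_tree A i) f).1 == (run (ra_tree A i) f).1)%:R)%:E)%E.

Definition expected_queries (R : realType) (V : Type) (A : rand_alg R V)
    (f : V -> V) : \bar R :=
  (\sum_(i <oo) (ra_weight A i * (run (ra_tree A i) f).2%:R)%:E)%E.

Definition solves_tarski (R : realType) (n k : nat)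
    (A : rand_alg R (grid n k)) : Prop :=
  forall f : grid n k -> grid n k, monotone_map f ->
    ((9 / 10 : R)%:E <= success_prob A f)%E.

(* Main.v *)
Require Import Defs.
From HB Require Import structures.
From mathcomp Require Import all_boot all_order all_algebra.
From mathcomp Require Import all_classical all_reals all_analysis.
From mathcomp Require Import zify ring lra.
Import Order.TTheory GRing.Theory Num.Theory.

Section Comb.
Local Set Implicit Arguments.
Local Unset Strict Implicit.
Variables n k : nat.
Local Notation G := (grid n k).

Definition up (x : 'I_n) : 'I_n := insubd x x.+1.
Definition down (x : 'I_n) : 'I_n := insubd x x.-1.

Lemma val_up x : val (up x) = if x.+1 < n then x.+1 else x.
Proof. by rewrite /up val_insubd. Qed.
Lemma val_down x : val (down x) = x.-1.
Proof. by rewrite /down val_insubd (leq_ltn_trans (leq_pred x) (ltn_ord x)). Qed.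

Lemma up_mono (x y : 'I_n) : x <= y -> up x <= up y.
Proof.
rewrite !val_up => h; have := ltn_ord y; case: ifP; case: ifP; lia.
Qed.
Lemma down_mono (x y : 'I_n) : x <= y -> down x <= down y.
Proof. rewrite !val_down; lia. Qed.
Lemma down_le_up (x : 'I_n) : down x <= up x.
Proof. rewrite val_down val_up; case: ifP; lia. Qed.

Definition phieq (a x : 'I_n) : 'I_n :=
  if x < a then up x else if a < x then down x else x.

Lemma phieq_mono a (x y : 'I_n) : x <= y -> phieq a x <= phieq a y.
Proof.
rewrite /phieq => h.
have ha := ltn_ord a. have hy := ltn_ord y.
case: (ltngtP x a) => h1; case: (ltngtP y a) => h2; rewrite ?val_up ?val_down; repeat case: ifP; lia.
Qed.

Lemma down_le_phieq a (x : 'I_n) : down x <= phieq a x.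
Proof.
rewrite /phieq; have := ltn_ord a; case: (ltngtP x a) => h1; rewrite ?val_up ?val_down; repeat case: ifP; lia.
Qed.
Lemma phieq_le_up a (x : 'I_n) : phieq a x <= up x.
Proof.
rewrite /phieq; have := ltn_ord a; case: (ltngtP x a) => h1; rewrite ?val_up ?val_down; repeat case: ifP; lia.
Qed.

Definition above (z v : G) (i : 'I_k) : bool :=
  [exists j : 'I_k, [&& j < i, z j < v j & [forall l : 'I_k, (l < j) ==> (z l <= v l)]]].
Definition below (z v : G) (i : 'I_k) : bool :=
  [exists j : 'I_k, [&& j < i, v j < z j & [forall l : 'I_k, (l < j) ==> (v l <= z l)]]].

Definition fz (z : G) (v : G) : G :=
  [ffun i => if above z v i then up (v i) else if below z v i then down (v i)
             else phieq (z i) (v i)].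

Lemma above_mono z v w i : grid_le v w -> above z v i -> above z w i.
Proof.
move=> hvw /existsP[j /and3P[ji zv /forallP al]]; apply/existsP; exists j.
rewrite ji /= (leq_trans zv (hvw j)) /=; apply/forallP => l; apply/implyP => lj.
exact: leq_trans (implyP (al l) lj) (hvw l).
Qed.

Lemma below_mono z v w i : grid_le v w -> below z w i -> below z v i.
Proof.
move=> hvw /existsP[j /and3P[ji zv /forallP al]]; apply/existsP; exists j.
rewrite ji /= (leq_ltn_trans (hvw j) zv) /=; apply/forallP => l; apply/implyP => lj.
exact: leq_trans (hvw l) (implyP (al l) lj).
Qed.

Lemma fz_mono z : monotone_map (fz z).
Proof.
move=> v w hvw i; rewrite !ffunE.
have hi := hvw i.
case hw: (above z w i).
  case: (above z v i) => /=; first exact: up_mono.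
  case: (below z v i) => /=.
    exact: leq_trans (down_le_up (v i)) (up_mono hi).
  exact: leq_trans (phieq_le_up _ _) (up_mono hi).
have -> : above z v i = false.
  by apply/negbTE/negP => /(above_mono hvw); rewrite hw.
case hbw: (below z w i).
  by rewrite (below_mono hvw hbw); exact: down_mono.
case: (below z v i) => /=.
  exact: leq_trans (down_mono hi) (down_le_phieq _ _).
exact: phieq_mono.
Qed.


Lemma first_diff (z v : G) : v != z ->
  exists j : 'I_k, v j != z j /\ forall l : 'I_k, l < j -> v l = z l.
Proof.
move=> hne.
have ex : exists m, [exists j : 'I_k, (j == m :> nat) && (v j != z j)].
  have [j hj] : exists j, v j != z j.
    apply/existsP; apply: contraR hne => /existsPn h; apply/eqP/ffunP => j.
    by apply/eqP; have := h j; rewrite negbK.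
  by exists (nat_of_ord j); apply/existsP; exists j; rewrite eqxx.
case: (ex_minnP ex) => m /existsP[j /andP[/eqP jm hj]] hmin.
exists j; split => // l lj; apply/eqP; apply/negPn/negP => hl.
suff : m <= l by rewrite -jm leqNgt lj.
by apply: hmin; apply/existsP; exists l; rewrite eqxx.
Qed.

Lemma prefix_eq (z v : G) (i : 'I_k) : (forall l : 'I_k, l < i -> v l = z l) ->
  above z v i = false /\ below z v i = false.
Proof.
move=> h; split; apply/negbTE/existsP => -[j /and3P[ji hj _]];
  by rewrite (h j ji) ltnn in hj.
Qed.

Lemma phieq_id (a : 'I_n) : phieq a a = a.
Proof. by rewrite /phieq ltnn. Qed.

Lemma fz_fixed (z v : G) : fz z v = v -> v = z.
Proof.
move=> hf; apply/eqP; apply/negPn/negP => /first_diff[j [hj hpre]].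
have := congr1 (fun f : G => f j) hf; rewrite ffunE.
have [-> ->] := prefix_eq hpre.
rewrite /phieq; have := ltn_ord (z j).
case: (ltngtP (v j) (z j)) => h1 hz.
- move/(congr1 (@nat_of_ord n)); rewrite val_up; case: ltnP; lia.
- move/(congr1 (@nat_of_ord n)); rewrite val_down; lia.
- by move: hj; rewrite (ord_inj h1) eqxx.
Qed.

Definition key (z v : G) : option ('I_k * bool) :=
  if [pick j | (v j != z j) && [forall l : 'I_k, (l < j) ==> (v l == z l)]] is Some j
  then Some (j, v j < z j) else None.

Definition H (v : G) (c : option ('I_k * bool)) : G :=
  match c with
  | None => v
  | Some (j, b) => [ffun i : 'I_k => if i < j then v i else if i == j then
                      (if b then up (v i) else down (v i))
                    else (if b then down (v i) else up (v i))]
  end.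

Lemma fz_key z v : fz z v = H v (key z v).
Proof.
rewrite /key; case: pickP => [j /andP[hj /forallP hpre0] | hnone].
  have hpre : forall l : 'I_k, l < j -> v l = z l.
    by move=> l lj; apply/eqP; exact: (implyP (hpre0 l) lj).
  apply/ffunP => i; rewrite !ffunE.
  case: (ltngtP i j) => hij.
  - have [-> ->] : above z v i = false /\ below z v i = false.
      by apply: prefix_eq => l li; apply: hpre; exact: ltn_trans li hij.
    by rewrite (hpre i hij) phieq_id.
  - have -> : (i == j) = false by apply/eqP => e; rewrite e ltnn in hij.
    case hb: (v j < z j).
      have -> : above z v i = false.
        apply/negbTE/existsP => -[j' /and3P[j'i hj' /forallP al]].
        case: (ltngtP j' j) => h.
        + by rewrite (hpre j' h) ltnn in hj'.
        + by have := implyP (al j) h; rewrite leqNgt hb.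
        + by rewrite (ord_inj h) in hj'; move: hj'; rewrite ltnNge ltnW.
      have -> // : below z v i = true.
      apply/existsP; exists j; rewrite hij hb /=; apply/forallP => l; apply/implyP => lj.
      by rewrite (hpre l lj).
    have -> // : above z v i = true.
    apply/existsP; exists j; rewrite hij /=.
    have -> /= : z j < v j by rewrite ltn_neqAle leqNgt hb andbT eq_sym.
    by apply/forallP => l; apply/implyP => lj; rewrite (hpre l lj).
  - have eij : i = j by apply: ord_inj.
    subst i; rewrite eqxx.
    have [-> ->] := prefix_eq hpre.
    rewrite /phieq; case hb: (v j < z j) => //.
    by have -> : z j < v j by rewrite ltn_neqAle leqNgt hb andbT eq_sym.
have -> : v = z.
  apply/eqP; apply/negPn/negP => /first_diff[j [hj hpre]].
  have := hnone j; rewrite hj /=; move/negbT/negP; apply; apply/forallP => l.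
  by apply/implyP => lj; rewrite (hpre l lj).
apply/ffunP => i; rewrite !ffunE /=.
have [-> ->] := @prefix_eq z z i (fun _ _ => erefl).
by rewrite phieq_id.
Qed.


Definition B := #|{: option ('I_k * bool)}|.
Lemma B_eq : B = (k * 2).+1.
Proof. by rewrite /B card_option card_prod card_ord card_bool. Qed.

Definition succb (t : dtree G) (z : G) : bool :=
  fz z (run t (fz z)).1 == (run t (fz z)).1.
Definition qn (t : dtree G) (z : G) : nat := (run t (fz z)).2.

Lemma count_tree (t : dtree G) : forall m (P : pred G),
  \sum_(z | P z) ((qn t z <= m) && succb t z) <= B ^ m.
Proof.
have B0 : 0 < B by rewrite B_eq.
elim: t => [x | v g IH] m P.
  apply: (@leq_trans (\sum_(z : G) (z == x))).
    rewrite [X in _ <= X](bigID P) /= -[X in X <= _]addn0 leq_add //.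
    apply: leq_sum => z _; rewrite /succb /=.
    by case: eqP => // /fz_fixed ->; rewrite eqxx.
  rewrite (bigD1 x) //= eqxx big1 ?addn0 ?expn_gt0 ?B0 //.
  by move=> z /negbTE ->.
case: m => [|m].
  by rewrite big1 // => z _; rewrite /qn /=.
rewrite (partition_big (fun z => key z v) predT) //=.
apply: (@leq_trans (\sum_(c : option ('I_k * bool)) B ^ m)); last first.
  by rewrite sum_nat_const cardT -cardE expnS.
apply: leq_sum => c _.
rewrite (eq_bigr (fun z => nat_of_bool ((qn (g (H v c)) z <= m) && succb (g (H v c)) z))).
  exact: (IH (H v c) m (fun z => P z && (key z v == c))).
move=> z /andP[_ /eqP hc].
by rewrite /qn /succb /= fz_key hc ltnS.
Qed.


Lemma tree_bound (t : dtree G) m :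
  m.+1 * (\sum_(z : G) succb t z) <= m.+1 * B ^ m + \sum_(z : G) qn t z.
Proof.
have h1 : \sum_(z : G) succb t z <=
    \sum_(z : G) ((qn t z <= m) && succb t z) + \sum_(z : G) (m < qn t z).
  rewrite -big_split /=; apply: leq_sum => z _.
  by case: (succb t z); case: leqP; rewrite ?andbT ?andbF.
apply: (leq_trans (leq_mul (leqnn m.+1) h1)).
rewrite mulnDr leq_add //.
  by rewrite leq_mul2l count_tree orbT.
rewrite big_distrr /=; apply: leq_sum => z _.
by case: ltnP => h; rewrite ?muln1 ?muln0.
Qed.

End Comb.

Local Open Scope ring_scope.

Lemma nat_part (n k : nat) : (2 <= n)%N -> (2 <= k)%N ->
  exists m : nat, [/\ (2 * B k ^ m <= #|{: grid n k}|)%N,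
     (n ^ k <= k ^ (4 * m.+1))%N & #|{: grid n k}| = (n ^ k)%N].
Proof.
move=> hn hk.
have hN : #|{: grid n k}| = (n ^ k)%N by rewrite /grid card_ffun !card_ord.
have hB : B k = (k * 2).+1 := B_eq k.
have B1 : (1 < B k)%N by rewrite hB; lia.
have N2 : (0 < n ^ k %/ 2)%N.
  have : (n ^ 1 <= n ^ k)%N by rewrite leq_pexp2l //; lia.
  rewrite expn1; lia.
have [hm1 hm2] := andP (trunc_log_bounds B1 N2).
set m := trunc_log (B k) (n ^ k %/ 2) in hm1 hm2.
exists m; split => //; rewrite ?hN.
  move: hm1; set b := (B k ^ m)%N; lia.
have h1 : (n ^ k <= 2 * B k ^ m.+1)%N.
  move: hm2; set b := (B k ^ m.+1)%N; lia.
have h2 : (B k ^ m.+1 <= (k ^ 3) ^ m.+1)%N.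
  rewrite leq_exp2r // hB !expnS expn0; nia.
have h3 : (2 * (k ^ 3) ^ m.+1 <= k * (k ^ 3) ^ m.+1)%N by rewrite leq_mul2r hk orbT.
have h4 : (k * (k ^ 3) ^ m.+1 = k ^ (3 * m.+1).+1)%N by rewrite -expnM expnS.
have h5 : (k ^ (3 * m.+1).+1 <= k ^ (4 * m.+1))%N by rewrite leq_pexp2l; lia.
apply: (leq_trans h1); apply: (leq_trans _ h5); rewrite -h4; apply: leq_trans h3.
by rewrite leq_mul2l h2 orbT.
Qed.

Lemma real_part (R : realType) (n k m : nat) : (2 <= n)%N -> (2 <= k)%N ->
  (n ^ k <= k ^ (4 * m.+1))%N ->
  1 / 20 * k%:R * ln (n%:R : R) / ln (k%:R : R) <= (m.+1)%:R / 5.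
Proof.
move=> hn hk h.
have lnk : 0 < ln (k%:R : R) by apply: ln_gt0; rewrite ltr1n.
have hl : ln ((n ^ k)%:R : R) <= ln ((k ^ (4 * m.+1))%:R : R).
  rewrite ler_ln ?posrE ?ltr0n ?expn_gt0 ?ler_nat //; lia.
have n0 : (0 : R) < n%:R by rewrite ltr0n (leq_trans _ hn).
have k0 : (0 : R) < k%:R by rewrite ltr0n (leq_trans _ hk).
move: hl; rewrite !natrX (lnXn _ n0) (lnXn _ k0).
rewrite -(mulr_natr (ln (n%:R : R)) k) -(mulr_natr (ln (k%:R : R))) natrM => hl.
rewrite ler_pdivrMr //.
lra.
Qed.

Lemma sum_EQ (R : realType) n k (A : rand_alg R (grid n k)) :
  (\sum_(z : grid n k) expected_queries A (fz z) =
   \sum_(i <oo) (ra_weight A i * (\sum_(z : grid n k) qn (ra_tree A i) z)%:R)%:E)%E.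
Proof.
rewrite /expected_queries -nneseries_sum; last first.
  by move=> z j _; rewrite lee_fin mulr_ge0 ?ra_weight_ge0.
apply: eq_eseriesr => i _.
by rewrite sumEFin natr_sum mulr_sumr.
Qed.

Lemma sum_ES (R : realType) n k (A : rand_alg R (grid n k)) :
  (\sum_(z : grid n k) success_prob A (fz z) =
   \sum_(i <oo) (ra_weight A i * (\sum_(z : grid n k) succb (ra_tree A i) z)%:R)%:E)%E.
Proof.
rewrite /success_prob -nneseries_sum; last first.
  by move=> z j _; rewrite lee_fin mulr_ge0 ?ra_weight_ge0.
apply: eq_eseriesr => i _.
by rewrite sumEFin natr_sum mulr_sumr.
Qed.

Lemma sum_lower (R : realType) n k (A : rand_alg R (grid n k)) m :
  solves_tarski A -> (2 * B k ^ m <= #|{: grid n k}|)%N ->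
  ((2 / 5 * m.+1%:R * (#|{: grid n k}|)%:R)%:E <=
     \sum_(z : grid n k) expected_queries A (fz z))%E.
Proof.
move=> hA hBm.
set N := #|{: grid n k}| in hBm *.
set X := (\sum_(z : grid n k) expected_queries A (fz z))%E.
set w := ra_weight A.
have hS : ((9 / 10 * N%:R)%:E <= \sum_(z : grid n k) success_prob A (fz z))%E.
  apply: (le_trans _ (lee_sum (index_enum _) (fun z _ => hA (fz z) (@fz_mono n k z)))).
  rewrite sumEFin lee_fin sumr_const -[_ *+ #|_|]mulr_natr mulrC /N.
  by [].
set S := fun i => (\sum_(z : grid n k) succb (ra_tree A i) z)%:R : R.
set Q := fun i => (\sum_(z : grid n k) qn (ra_tree A i) z)%:R : R.
set m1 := (m.+1)%:R : R.
set bm := ((m.+1 * B k ^ m)%N)%:R : R.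
have hi : forall i, ((m1 * (w i * S i))%:E <= (bm * w i)%:E + (w i * Q i)%:E)%E.
  move=> i; rewrite -EFinD lee_fin.
  have := tree_bound (ra_tree A i) m; rewrite -(ler_nat R) natrD !natrM => h.
  have := ler_wpM2l (ra_weight_ge0 A i) h.
  rewrite /S /Q /bm /m1 /w natrM; lra.
have w0 : forall i, 0 <= w i by move=> i; exact: ra_weight_ge0.
have hw1 : (\sum_(i <oo) (w i)%:E = 1)%E by exact: ra_weight_sum1.
have chain : ((m1 * (9 / 10 * N%:R))%:E <= bm%:E + X)%E.
  rewrite EFinM; apply: (le_trans (lee_wpmul2l _ hS)); first by rewrite lee_fin.
  rewrite sum_ES -/S -nneseriesZl; last by move=> i _; rewrite lee_fin mulr_ge0.
  apply: (@le_trans _ _ (\sum_(i <oo) ((bm * w i)%:E + (w i * Q i)%:E))%E).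
    apply: lee_nneseries.
    - by move=> i _ _; rewrite lee_fin !mulr_ge0.
    - by move=> i _; rewrite -EFinM; exact: hi.
  rewrite nneseriesD; last 2 first.
  - by move=> i _ _; rewrite lee_fin mulr_ge0.
  - by move=> i _ _; rewrite lee_fin mulr_ge0.
  rewrite /X sum_EQ -/Q.
  under eq_eseriesr do rewrite EFinM.
  rewrite nneseriesZl; last by move=> i _; rewrite lee_fin.
  by rewrite hw1 mule1.
apply: le_trans (_ : ((m1 * (9 / 10 * N%:R) - bm)%:E <= X)%E).
  rewrite lee_fin.
  have hB : 2 * (B k ^ m)%:R <= N%:R :> R by rewrite -(ler_nat R) natrM in hBm.
  have m10 : 0 <= m1 by rewrite /m1.
  have := ler_wpM2l m10 hB.
  rewrite /bm natrM -/m1; lra.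
by rewrite EFinB leeBlDl // addeC.
Qed.

Theorem proposition9 (R : realType) :
  exists c : R, (0 < c)%R /\
    forall (n k : nat), (2 <= k)%N ->
    forall A : rand_alg R (grid n k), solves_tarski A ->
    exists f : grid n k -> grid n k, monotone_map f /\
      (((c * k%:R * ln (n%:R : R) / ln (k%:R : R))%R)%:E
         <= expected_queries A f)%E.
Proof.
exists (1 / 20 : R); split; first by rewrite divr_gt0.
move=> n k hk A hA.
have lnk : 0 < ln (k%:R : R) by apply: ln_gt0; rewrite ltr1n.
case: (leqP n 1) => hn.
  exists id; split; first by move=> x y.
  apply: (@le_trans _ _ 0%E).
    rewrite lee_fin ler_pdivrMr // mul0r.
    apply: mulr_ge0_le0; first by rewrite mulr_ge0.
    by apply: ln_le0; rewrite lern1.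
  by apply: nneseries_ge0 => i _ _; rewrite lee_fin mulr_ge0 ?ra_weight_ge0.
have [m [hBm hnk hN]] := @nat_part n k hn hk.
have hT := @real_part R n k m hn hk hnk.
have hL := @sum_lower R n k A m hA hBm.
case: (pselect (exists z, ((1 / 20 * k%:R * ln (n%:R : R) / ln (k%:R : R))%:E
                  <= expected_queries A (fz z))%E)) => [[z hz]|hne].
  by exists (fz z); split => //; exact: fz_mono.
exfalso.
have hlt : forall z, (expected_queries A (fz z) <
    ((1 / 20 * k%:R * ln (n%:R : R) / ln (k%:R : R)))%:E)%E.
  by move=> z; rewrite ltNge; apply/negP => h; apply: hne; exists z.
have := le_trans hL (lee_sum (index_enum _) (fun z _ => ltW (hlt z))).
rewrite sumEFin lee_fin sumr_const -[_ *+ #|_|]mulr_natr.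
set T := 1 / 20 * _ * _ / _.
have Npos : (0 : R) < #|{: grid n k}|%:R by rewrite hN ltr0n expn_gt0; lia.
have mpos : (0 : R) < m.+1%:R by rewrite ltr0n.
move=> h.
have : 2 / 5 * m.+1%:R <= T by rewrite -(ler_pM2r Npos).
move: hT; rewrite -/T; lra.
Qed.
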